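(* Let $\Psi_{\text{pt}}$ and $\Psi_{\text{tg}}$ be two $L$-layer Kolmogorov--Arnold networks (KANs) with the same widths $n_1,\dots,n_{L+1}$ and the same basis functions $b_1,\dots,b_{n_d}$, with parameter tensors $\{\mathcal{A}_{\ell,\text{pt}}\}_{\ell\in[L]}$ and $\{\mathcal{A}_{\ell,\text{tg}}\}_{\ell\in[L]}$ respectively, $\mathcal{A}_{\ell,\cdot}\in\mathbb{R}^{n_\ell\times n_{\ell+1}\times n_d}$. Assume that each basis function $b_k:\mathbb{R}\to\mathbb{R}$ is smooth, satisfies $|b_k(z)|\le B$ for all $z$, and is Lipschitz with constant $L_b>0$, and that $\|\mathcal{A}_{\ell,\text{tg}}\|_F\le M$ and $\|\mathcal{A}_{\ell,\text{pt}}\|_F\le M$ for all $\ell\in[L]$, with $B,M>0$. Fix integers $1\le r_{\ell,1}\le n_\ell$, $1\le r_{\ell,2}\le n_{\ell+1}$, $1\le r_{\ell,3}\le n_d$ for each $\ell\in[L]$. Then there exist core tensors $\mathcal{G}_\ell\in\mathbb{R}^{r_{\ell,1}\times r_{\ell,2}\times r_{\ell,3}}$ and matrices $\bm{U}_\ell^{(1)}\in\mathbb{R}^{n_\ell\times r_{\ell,1}}$, $\bm{U}_\ell^{(2)}\in\mathbb{R}^{n_{\ell+1}\times r_{\ell,2}}$, $\bm{U}_\ell^{(3)}\in\mathbb{R}^{n_d\times r_{\ell,3}}$, $\ell\in[L]$, such that the KAN $\Psi_{\text{ft}}$ with parameter tensors $$\mathcal{A}_{\ell,\text{ft}}=\mathcal{A}_{\ell,\text{pt}}+\mathcal{G}_\ell\times_1\bm{U}_\ell^{(1)}\times_2\bm{U}_\ell^{(2)}\times_3\bm{U}_\ell^{(3)},\quad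 \ell\in[L],$$ satisfies, for every $\bm{x}\in\mathbb{R}^{n_1}$, $$\|\Psi_{\text{ft}}(\bm{x})-\Psi_{\text{tg}}(\bm{x})\|_2\le\sum_{\ell=1}^{L}C_\ell\Big(\sum_{r=r_{\ell,1}+1}^{n_\ell}\sigma_r(\bm{E}_\ell^{(1)})^2+\sum_{r=r_{\ell,2}+1}^{n_{\ell+1}}\sigma_r(\bm{E}_\ell^{(2)})^2+\sum_{r=r_{\ell,3}+1}^{n_d}\sigma_r(\bm{E}_\ell^{(3)})^2\Big)^{1/2},$$ where $C_\ell:=(M L_b\sqrt{n_d})^{L-\ell}\cdot B\sqrt{n_\ell n_d}$.
   Context: A KAN of depth $L$ with widths $n_1,\dots,n_{L+1}$, basis functions $b_1,\dots,b_{n_d}:\mathbb{R}\to\mathbb{R}$ and parameter tensors $\mathcal{A}_\ell=(a_{\ell,p,q,k})\in\mathbb{R}^{n_\ell\times n_{\ell+1}\times n_d}$ is the map $\Psi:\mathbb{R}^{n_1}\to\mathbb{R}^{n_{L+1}}$, $\Psi(\bm{x})=\bm{z}_{L+1}$, where $\bm{z}_1=\bm{x}$ and $z_{\ell+1,q}=\sum_{p=1}^{n_\ell}\sum_{k=1}^{n_d}a_{\ell,p,q,k}\,b_k(z_{\ell,p})$ for $q\in[n_{\ell+1}]$, $\ell\in[L]$. The mode products are defined by $(\mathcal{G}\times_1\bm{U}^{(1)}\times_2\bm{U}^{(2)}\times_3\bm{U}^{(3)})_{i,j,k}=\sum_{a,b,c}g_{a,b,c}U^{(1)}_{i,a}U^{(2)}_{j,b}U^{(3)}_{k,c}$.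 The error tensor is $\mathcal{E}_\ell=\mathcal{A}_{\ell,\text{tg}}-\mathcal{A}_{\ell,\text{pt}}$, and $\bm{E}_\ell^{(1)}\in\mathbb{R}^{n_\ell\times n_{\ell+1}n_d}$, $\bm{E}_\ell^{(2)}\in\mathbb{R}^{n_{\ell+1}\times n_\ell n_d}$, $\bm{E}_\ell^{(3)}\in\mathbb{R}^{n_d\times n_\ell n_{\ell+1}}$ are its mode-$i$ unfoldings (the matrix whose columns are the mode-$i$ fibers of $\mathcal{E}_\ell$). $\sigma_r(\cdot)$ denotes the $r$-th largest singular value (taken to be $0$ if $r$ exceeds the number of singular values). *)

(* Defs.v *)
From HB Require Import structures.
From mathcomp Require Import all_boot all_order all_algebra.
From mathcomp Require Import all_classical all_reals.
From mathcomp Require Import topology normedtype derive.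
From Stdlib Require Import ClassicalEpsilon.
Set Implicit Arguments. Unset Strict Implicit. Unset Printing Implicit Defensive.
Import Order.TTheory GRing.Theory Num.Theory.
Import numFieldNormedType.Exports.
Local Open Scope ring_scope.

Definition tensor (R : Type) (a b c : nat) := 'I_a -> 'I_b -> 'I_c -> R.

Section Defs.
Variable R : realType.

Definition smooth (f : R -> R) : Prop :=
  forall (k : nat) (x : R), derivable (derive1n k f) x 1.

Definition lipschitz_with (K : R) (f : R -> R) : Prop :=
  forall x y : R, `|f x - f y| <= K * `|x - y|.

Definition frob (a b c : nat) (T : tensor R a b c) : R :=
  Num.sqrt (\sum_(i < a) \sum_(j < b) \sum_(k < c) T i j k ^+ 2).

Definition norm2 (m : nat) (v : 'I_m -> R) : R :=
  Num.sqrt (\sum_(i < m) v i ^+ 2).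

Definition tucker (r1 r2 r3 m1 m2 m3 : nat) (G : tensor R r1 r2 r3)
  (U1 : 'M[R]_(m1, r1)) (U2 : 'M[R]_(m2, r2)) (U3 : 'M[R]_(m3, r3)) :
  tensor R m1 m2 m3 :=
  fun i j k => \sum_(a < r1) \sum_(b < r2) \sum_(c < r3)
                 G a b c * U1 i a * U2 j b * U3 k c.

Definition tadd (a b c : nat) (T S : tensor R a b c) : tensor R a b c :=
  fun i j k => T i j k + S i j k.
Definition tsub (a b c : nat) (T S : tensor R a b c) : tensor R a b c :=
  fun i j k => T i j k - S i j k.

Definition unfold1 (a b c : nat) (T : tensor R a b c) : 'M[R]_(a, b * c) :=
  \matrix_(i < a) mxvec (\matrix_(j < b, k < c) T i j k).
Definition unfold2 (a b c : nat) (T : tensor R a b c) : 'M[R]_(b, a * c) :=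
  \matrix_(j < b) mxvec (\matrix_(i < a, k < c) T i j k).
Definition unfold3 (a b c : nat) (T : tensor R a b c) : 'M[R]_(c, a * b) :=
  \matrix_(k < c) mxvec (\matrix_(i < a, j < b) T i j k).

Definition is_sv_seq (m n : nat) (A : 'M[R]_(m, n)) (d : nat -> R) : Prop :=
  (forall i, 0 <= d i) /\ (forall i j, (i <= j)%N -> d j <= d i) /\
  (forall i, (minn m n <= i)%N -> d i = 0) /\
  exists (U : 'M[R]_m) (V : 'M[R]_n),
    U *m U^T = 1%:M /\ V *m V^T = 1%:M /\
    A = U *m (\matrix_(i < m, j < n) (if (i : nat) == j then d i else 0))
          *m V^T.

Definition sv_seq (m n : nat) (A : 'M[R]_(m, n)) : nat -> R :=
  epsilon (inhabits (fun _ => 0)) (is_sv_seq A).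

(* sigma A r : the r-th largest singular value (1-based), 0 if r exceeds
   the number of singular values *)
Definition sigma (m n : nat) (A : 'M[R]_(m, n)) (r : nat) : R :=
  sv_seq A r.-1.

Definition kan_layer (nd p q : nat) (b : 'I_nd -> R -> R)
  (A : tensor R p q nd) (z : 'I_p -> R) : 'I_q -> R :=
  fun j => \sum_(i < p) \sum_(k < nd) A i j k * b k (z i).

(* layers are 0-based here: layer l maps R^(n l) to R^(n l.+1);
   z_0 = x and z_k is the input of layer k *)
Fixpoint kan_z (n : nat -> nat) (nd : nat) (b : 'I_nd -> R -> R)
  (A : forall l : nat, tensor R (n l) (n l.+1) nd) (x : 'I_(n 0) -> R)
  (k : nat) : 'I_(n k) -> R :=
  match k return 'I_(n k) -> R with
  | 0 => x
  | k'.+1 => kan_layer b (A k') (@kan_z n nd b A x k')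
  end.

Definition kan (L : nat) (n : nat -> nat) (nd : nat) (b : 'I_nd -> R -> R)
  (A : forall l : nat, tensor R (n l) (n l.+1) nd) (x : 'I_(n 0) -> R) :
  'I_(n L) -> R := @kan_z n nd b A x L.

End Defs.

Arguments kan {R} L {n nd} b A x _.

(* Main.v *)
Require Import Defs.
From HB Require Import structures.
From mathcomp Require Import all_boot all_order all_algebra.
From mathcomp Require Import all_classical all_reals.
From mathcomp Require Import topology normedtype derive.
From mathcomp Require Import matrix_normedtype.
From mathcomp Require Import ring lra.
Set Implicit Arguments. Unset Strict Implicit. Unset Printing Implicit Defensive.
Import Order.TTheory GRing.Theory Num.Theory.
Import numFieldNormedType.Exports.
Local Open Scope ring_scope.
Section SVD.
Variable R : realType.

Definition dot n (x y : 'cV[R]_n) : R := (x^T *m y) 0 0.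
Definition nsq n (x : 'cV[R]_n) : R := dot x x.

Lemma dotE n (x y : 'cV[R]_n) : dot x y = \sum_i x i 0 * y i 0.
Proof. by rewrite /dot mxE; apply: eq_bigr => i _; rewrite mxE. Qed.

Lemma nsqE n (x : 'cV[R]_n) : nsq x = \sum_i x i 0 ^+ 2.
Proof. by rewrite /nsq dotE; apply: eq_bigr => i _; rewrite expr2. Qed.

Lemma nsq_ge0 n (x : 'cV[R]_n) : 0 <= nsq x.
Proof. by rewrite nsqE; apply: sumr_ge0 => i _; rewrite sqr_ge0. Qed.

Lemma nsq_eq0 n (x : 'cV[R]_n) : nsq x = 0 -> x = 0.
Proof.
rewrite nsqE => /eqP; rewrite psumr_eq0; last by move=> i _; rewrite sqr_ge0.
move=> /allP H; apply/matrixP => i j; rewrite ord1 mxE.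
by have := H i (mem_index_enum i); rewrite /= sqrf_eq0 => /eqP.
Qed.

Lemma dotC n (x y : 'cV[R]_n) : dot x y = dot y x.
Proof. by rewrite !dotE; apply: eq_bigr => i _; rewrite mulrC. Qed.

Lemma dotDl n (x y z : 'cV[R]_n) : dot (x + y) z = dot x z + dot y z.
Proof. by rewrite !dotE -big_split; apply: eq_bigr => i _; rewrite mxE mulrDl. Qed.

Lemma dotZl n a (x z : 'cV[R]_n) : dot (a *: x) z = a * dot x z.
Proof. by rewrite !dotE mulr_sumr; apply: eq_bigr => i _; rewrite mxE mulrA. Qed.

Lemma dotDr n (x y z : 'cV[R]_n) : dot z (x + y) = dot z x + dot z y.
Proof. by rewrite dotC dotDl !(dotC z). Qed.

Lemma dotZr n a (x z : 'cV[R]_n) : dot z (a *: x) = a * dot z x.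
Proof. by rewrite dotC dotZl dotC. Qed.

Lemma dotNl n (x z : 'cV[R]_n) : dot (- x) z = - dot x z.
Proof. by rewrite -scaleN1r dotZl mulN1r. Qed.

Lemma dot_mul m n (A : 'M[R]_(m, n)) x y : dot (A *m x) y = dot x (A^T *m y).
Proof. by rewrite /dot trmx_mul mulmxA. Qed.

Lemma nsq_orth m n (Q : 'M[R]_(m, n)) x : Q^T *m Q = 1%:M -> nsq (Q *m x) = nsq x.
Proof. by move=> HQ; rewrite /nsq dot_mul mulmxA HQ mul1mx. Qed.

Lemma nsqZ n a (x : 'cV[R]_n) : nsq (a *: x) = a ^+ 2 * nsq x.
Proof. by rewrite /nsq dotZl dotZr mulrA expr2. Qed.

Lemma orthC n (Q : 'M[R]_n) : Q *m Q^T = 1%:M -> Q^T *m Q = 1%:M.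
Proof. exact: mulmx1C. Qed.

Definition e0 n : 'cV[R]_n.+1 := delta_mx 0 0.

Lemma nsq_e0 n : nsq (e0 n) = 1.
Proof.
rewrite nsqE (bigD1 ord0) //= big1 ?addr0 => [|i /negPf Hi]; rewrite mxE.
  by rewrite eqxx /= expr1n.
by rewrite Hi /= expr0n.
Qed.

Lemma householder n (v : 'cV[R]_n.+1) : nsq v = 1 ->
  exists Q : 'M[R]_n.+1, [/\ Q^T *m Q = 1%:M, Q *m Q^T = 1%:M & Q *m e0 n = v].
Proof.
move=> Hv.
set w := v - e0 n.
have [w0|wn0] := eqVneq w 0.
  exists 1%:M; rewrite trmx1 mul1mx; split => //.
  by rewrite mul1mx; apply/eqP; rewrite eq_sym -subr_eq0 -/w w0.
have Nw : nsq w != 0 by apply/eqP => /nsq_eq0; apply/eqP.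
have Hw0 : nsq w = - 2 * dot w (e0 n).
  rewrite /w /nsq !dotDl !dotDr !dotNl !(dotC _ (- _)) !dotNl.
  rewrite -/(nsq v) Hv -/(nsq (e0 n)) nsq_e0 dotC.
  ring.
set c := 2 / nsq w.
set H := 1%:M - c *: (w *m w^T).
have HT : H^T = H by rewrite /H linearB /= trmx1 linearZ /= trmx_mul trmxK.
have PP : (w *m w^T) *m (w *m w^T) = nsq w *: (w *m w^T).
  rewrite -mulmxA (mulmxA w^T) [w^T *m w]mx11_scalar mul_scalar_mx.
  by rewrite -scalemxAr.
have HH : H *m H = 1%:M.
  rewrite /H mulmxBl mul1mx mulmxBr mulmx1 -scalemxAl -scalemxAr PP !scalerA.
  have -> : c * c * nsq w = c + c by rewrite /c -mulrA mulfVK //; ring.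
  by rewrite scalerDl opprB addrK subrK.
exists H; rewrite HT; split => //.
rewrite /H mulmxBl mul1mx -scalemxAl -mulmxA [w^T *m e0 n]mx11_scalar.
rewrite mul_mx_scalar -/(dot w (e0 n)) scalerA.
have -> : c * dot w (e0 n) = -1.
  have Hd : dot w (e0 n) != 0 by apply: contraNneq Nw => H0; rewrite Hw0 H0 mulr0.
  by rewrite /c Hw0; field.
by rewrite scaleN1r opprK /w addrC subrK.
Qed.

End SVD.
Section Ray.
Variable R : realType.

Lemma cont_sum (T : topologicalType) (I : finType) (F : I -> T -> R) :
  (forall i, continuous (F i)) -> continuous (fun x => \sum_i F i x).
Proof.
move=> HF; rewrite unlock /reducebig; elim: (index_enum I) => [|a s IH] /=.
  exact: cst_continuous.
move=> x; apply: continuousD; [exact: HF | exact: IH].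
Qed.

Lemma cont_sq (T : topologicalType) (f : T -> R) :
  continuous f -> continuous (fun x => f x ^+ 2).
Proof.
move=> Hf x; have -> : (fun x => f x ^+ 2) = f \* f by apply: funext => y; rewrite expr2.
by apply: continuousM; apply: Hf.
Qed.

Lemma rayleigh_max m n (A : 'M[R]_(m, n.+1)) : exists v : 'cV[R]_n.+1,
  nsq v = 1 /\ forall w, nsq (A *m w) <= nsq (A *m v) * nsq w.
Proof.
pose f (r : 'rV[R]_n.+1) := nsq (A *m r^T).
pose g (r : 'rV[R]_n.+1) := nsq r^T.
pose S := (g @^-1` [set x | x = 1])%classic.
have gE r : g r = \sum_i (r 0 i) ^+ 2.
  by rewrite /g nsqE; apply: eq_bigr => i _; rewrite mxE.
have fE r : f r = \sum_i (\sum_j A i j * r 0 j) ^+ 2.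
  rewrite /f nsqE; apply: eq_bigr => i _; rewrite mxE; congr (_ ^+ 2).
  by apply: eq_bigr => j _; rewrite mxE.
have gc : continuous g.
  have -> : g = (fun r => \sum_i (r 0 i) ^+ 2) by apply: funext => r; rewrite gE.
  apply: cont_sum => i; apply: cont_sq; exact: coord_continuous.
have fc : continuous f.
  have -> : f = (fun r => \sum_i (\sum_j A i j * r 0 j) ^+ 2).
    by apply: funext => r; rewrite fE.
  apply: cont_sum => i; apply: cont_sq; apply: cont_sum => j.
  move=> x; apply: continuousM; [exact: cst_continuous | exact: coord_continuous].
have S0 : (S !=set0)%classic by exists (e0 R n)^T; rewrite /S /= /g trmxK nsq_e0.
have Scl : closed S by apply: preimage_closed; [move=> x _; exact: gc | exact: closed_eq].
have Sb : bounded_set S.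
  rewrite /= /bounded_near; near=> M => r; rewrite /S /= => Hr.
  have -> : `|r| = mx_norm r by []. rewrite mx_normrE.
  apply: (@le_trans _ _ 1).
    apply: bigmax_le => // -[i j] _ /=; rewrite ord1.
    rewrite -(expr_le1 (n := 2)) //= real_normK ?num_real //.
    rewrite -Hr gE (bigD1 j) //= lerDl; apply: sumr_ge0 => k _; exact: sqr_ge0.
  near: M; apply: nbhs_pinfty_ge; exact: num_real.
have [c Sc Hc] := EVT_max_rV S0 (bounded_closed_compact Sb Scl) (continuous_subspaceT fc).
move: Sc; rewrite inE /S /= => Hgc.
exists c^T; split => // w.
have [w0|wn0] := eqVneq (nsq w) 0.
  rewrite w0 mulr0 (nsq_eq0 w0) mulmx0 nsqE big1 // => i _.
  by rewrite mxE expr0n.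
have wpos : 0 < nsq w by rewrite lt_def wn0 nsq_ge0.
pose s := Num.sqrt (nsq w).
have spos : 0 < s by rewrite sqrtr_gt0.
have := Hc (s^-1 *: w)^T; rewrite !inE /S /= /f /g !trmxK -scalemxAr !nsqZ.
rewrite exprVn sqr_sqrtr ?nsq_ge0 // mulVf // => /(_ erefl).
by rewrite ler_pdivrMl // mulrC.
Unshelve. all: end_near.
Qed.

End Ray.
Section Eig.
Variable R : realType.

Lemma nsqD n (x y : 'cV[R]_n) t :
  nsq (x + t *: y) = nsq x + 2 * t * dot x y + t ^+ 2 * nsq y.
Proof.
rewrite /nsq !dotDl !dotDr !dotZl !dotZr (dotC y x); ring.
Qed.

Lemma rayleigh_eig m n (A : 'M[R]_(m, n)) (v : 'cV[R]_n) :
  nsq v = 1 -> (forall w, nsq (A *m w) <= nsq (A *m v) * nsq w) ->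
  A^T *m (A *m v) = nsq (A *m v) *: v.
Proof.
move=> Hv Hmax; set l := nsq (A *m v).
set y := A^T *m (A *m v) - l *: v.
have key : dot (A *m v) (A *m y) - l * dot v y = nsq y.
  by rewrite dotC dot_mul dotC /nsq /y dotDl dotNl dotZl.
set N := nsq y; set K := nsq (A *m y) - l * N.
have Ht t : 2 * t * N + t ^+ 2 * K <= 0.
  have := Hmax (v + t *: y); rewrite mulmxDr -scalemxAr !nsqD Hv -/l -/N.
  have key' : dot (A *m v) (A *m y) = N + l * dot v y by rewrite /N -key; ring.
  rewrite key' /K => H; rewrite -subr_ge0 in H; rewrite -oppr_ge0.
  by apply: le_trans H _; rewrite le_eqVlt; apply/orP; left; apply/eqP; ring.
pose t := N / (1 + `|K|).
have HK : 0 < 1 + `|K| by rewrite ltr_pwDl.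
have Ht2 : t * (1 + `|K|) = N by rewrite /t mulfVK // gt_eqF.
have := Ht t; rewrite -Ht2.
have E : 2 * t * (t * (1 + `|K|)) + t ^+ 2 * K = t ^+ 2 * (2 + 2 * `|K| + K) by ring.
rewrite E => H1.
have H2 : 0 < 2 + 2 * `|K| + K.
  have : - `|K| <= K by rewrite lerNnormlW.
  have : 0 <= `|K| by [].
  lra.
have t0 : t ^+ 2 <= 0 by rewrite -(pmulr_lle0 _ H2).
have t00 : t = 0 by apply/eqP; rewrite -sqrf_eq0 eq_le t0 sqr_ge0.
have N0 : N = 0 by rewrite -Ht2 t00 mul0r.
by apply/eqP; rewrite -subr_eq0 -/y (nsq_eq0 N0).
Qed.

End Eig.
Section SVDex.
Variable R : realType.

Definition Dmx m n (d : nat -> R) : 'M[R]_(m, n) :=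
  \matrix_(i < m, j < n) (if (i : nat) == j then d i else 0).

Lemma mul_delta_col m n (M : 'M[R]_(m, n)) j a (b : 'I_1) :
  (M *m delta_mx j 0) a b = M a j.
Proof.
rewrite mxE (bigD1 j) //= big1 ?addr0 => [|k /negPf Hk]; rewrite mxE.
  by rewrite eqxx ord1 eqxx mulr1.
by rewrite Hk mulr0.
Qed.

Lemma nsq_delta n (j : 'I_n) : nsq (delta_mx j 0 : 'cV[R]_n) = 1.
Proof.
rewrite nsqE (bigD1 j) //= big1 ?addr0 => [|i /negPf Hi]; rewrite mxE.
  by rewrite !eqxx /= expr1n.
by rewrite Hi /= expr0n.
Qed.

Lemma nsq_col0 m n (z : 'cV[R]_n) : nsq (col_mx (0 : 'cV[R]_m) z) = nsq z.
Proof.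
rewrite !nsqE big_split_ord /= big1 ?add0r => [|i _].
  by apply: eq_bigr => i _; rewrite col_mxEd.
by rewrite col_mxEu mxE expr0n.
Qed.

Lemma sv_bound m n (A : 'M[R]_(m, n)) (d : nat -> R) U V c :
  (forall i, (minn m n <= i)%N -> d i = 0) -> 0 <= c ->
  U *m U^T = 1%:M -> V *m V^T = 1%:M ->
  A = U *m Dmx m n d *m V^T ->
  (forall x, nsq (A *m x) <= c * nsq x) -> forall i, d i ^+ 2 <= c.
Proof.
move=> Hz c0 HU HV HA Hx i.
case: (ltnP i (minn m n)) => Hi; last by rewrite Hz // expr0n.
have im : (i < m)%N by apply: leq_trans Hi (geq_minl _ _).
have iN : (i < n)%N by apply: leq_trans Hi (geq_minr _ _).
have := Hx (V *m delta_mx (Ordinal iN) 0).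
rewrite (@nsq_orth _ _ _ V) ?orthC // nsq_delta mulr1 HA -!mulmxA (mulmxA V^T) orthC //.
rewrite mul1mx (@nsq_orth _ _ _ U) ?orthC //; apply: le_trans.
rewrite nsqE (bigD1 (Ordinal im)) //= mul_delta_col mxE eqxx lerDl.
by apply: sumr_ge0 => k _; rewrite sqr_ge0.
Qed.

Lemma svd_zero m n (A : 'M[R]_(m, n)) : A = 0 -> is_sv_seq A (fun _ => 0).
Proof.
move=> ->; split => //; split => //; split => //.
exists 1%:M, 1%:M; rewrite !trmx1 !mulmx1; split => //; split => //.
rewrite mul1mx; apply/matrixP => i j; rewrite !mxE; by case: eqP.
Qed.

End SVDex.
Section SVDmain.
Variable R : realType.

Lemma exists_nz m n (A : 'M[R]_(m, n)) : A != 0 -> exists i j, A i j != 0.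
Proof.
move=> An0; case: (pselect (exists i j, A i j != 0)) => // H; exfalso.
move/eqP: An0; apply; apply/matrixP => i j; rewrite mxE.
apply/eqP/negPn/negP => Hij; apply: H; by exists i, j.
Qed.

Lemma lsh0 k : lshift k (0 : 'I_1) = (0 : 'I_(1 + k)).
Proof. exact: val_inj. Qed.

Lemma rsh_neq0 k (j : 'I_k) : (rshift 1 j == (0 : 'I_(1 + k))) = false.
Proof. by rewrite -val_eqE /= add1n. Qed.

Lemma svd_exists m n (A : 'M[R]_(m, n)) : exists d, is_sv_seq A d.
Proof.
elim: m n A => [|m IH] n A.
  by exists (fun _ => 0); apply: svd_zero; rewrite flatmx0.
case: n A => [|n] A.
  by exists (fun _ => 0); apply: svd_zero; rewrite thinmx0.
have [->|An0] := eqVneq A 0; first by exists (fun _ => 0); apply: svd_zero.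
have [v [Hv Hmax]] := rayleigh_max A.
set l := nsq (A *m v) in Hmax.
have Heig : A^T *m (A *m v) = l *: v by exact: rayleigh_eig.
have lpos : 0 < l.
  have [i [j Hij]] := exists_nz An0.
  have := Hmax (delta_mx j 0); rewrite nsq_delta mulr1; apply: lt_le_trans.
  rewrite nsqE (bigD1 i) //= mul_delta_col; apply: ltr_pwDl.
    by rewrite lt_def sqr_ge0 andbT sqrf_eq0.
  by apply: sumr_ge0 => k _; rewrite sqr_ge0.
set s := Num.sqrt l.
have spos : 0 < s by rewrite sqrtr_gt0.
have ss : s * s = l by rewrite -expr2 sqr_sqrtr // ltW.
set u := s^-1 *: (A *m v).
have Hu : nsq u = 1 by rewrite nsqZ -/l -ss exprVn expr2 mulVf // mulf_neq0 // gt_eqF.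
have Av : A *m v = s *: u by rewrite /u scalerA mulfV ?gt_eqF // scale1r.
have Atu : A^T *m u = s *: v.
  by rewrite /u -scalemxAr Heig scalerA -ss mulrA mulVf ?gt_eqF // mul1r.
have [Qv [HQv1 HQv2 HQv3]] := householder Hv.
have [Qu [HQu1 HQu2 HQu3]] := householder Hu.
have [T defT] : exists T : 'M[R]_(1 + m, 1 + n), T = Qu^T *m A *m Qv by exists (Qu^T *m A *m Qv).
have Te : T *m e0 R n = s *: e0 R m.
  by rewrite defT -!mulmxA HQv3 Av -scalemxAr -HQu3 mulmxA HQu1 mul1mx.
have TTe : T^T *m e0 R m = s *: e0 R n.
  rewrite defT !trmx_mul trmxK -mulmxA -mulmxA HQu3 Atu -scalemxAr -HQv3.
  by rewrite mulmxA HQv1 mul1mx.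
have Tcol a : T a 0 = s * (a == 0)%:R.
  by rewrite -(mul_delta_col T 0 a 0) -/(e0 R n) Te !mxE andbT.
have Trow b : T 0 b = s * (b == 0)%:R.
  have -> : T 0 b = T^T b 0 by rewrite [RHS]mxE.
  by rewrite -(mul_delta_col T^T 0 b 0) -/(e0 R m) TTe !mxE andbT.
have Hul : ulsubmx T = s%:M.
  by apply/matrixP => i j; rewrite !ord1 !mxE /= !lsh0 Tcol eqxx mulr1.
have Hur : ursubmx T = 0.
  by apply/matrixP => i j; rewrite !ord1 !mxE /= !lsh0 Trow rsh_neq0 mulr0.
have Hdl : dlsubmx T = 0.
  by apply/matrixP => i j; rewrite !ord1 !mxE /= !lsh0 Tcol rsh_neq0 mulr0.
set A' := drsubmx T.
have HT : T = block_mx s%:M 0 0 A' by rewrite -[T]submxK Hul Hur Hdl.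
have [d' [d'0 [d'mon [d'z [U' [V' [HU' [HV' HA']]]]]]]] := IH n A'.
have HA'x x : nsq (A' *m x) <= l * nsq x.
  have := Hmax (Qv *m (col_mx (0 : 'cV[R]_1) x : 'cV_n.+1)).
  rewrite (@nsq_orth _ _ _ Qv) //.
  have -> : nsq (col_mx (0 : 'cV[R]_1) x : 'cV_n.+1) = nsq x := nsq_col0 1 x.
  have -> : A *m (Qv *m (col_mx (0 : 'cV[R]_1) x : 'cV_n.+1)) = Qu *m (T *m (col_mx (0 : 'cV[R]_1) x : 'cV_n.+1)).
    by rewrite defT !mulmxA HQu2 mul1mx.
  rewrite (@nsq_orth _ _ _ Qu) // HT mul_block_col !mul0mx !mulmx0 !addr0 add0r.
  by rewrite (nsq_col0 1 (A' *m x)).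
have d'b k : d' k <= s.
  have := sv_bound d'z (ltW lpos) HU' HV' HA' HA'x k.
  rewrite -ss => H; have := d'0 k; nra.
pose d k := if k is k'.+1 then d' k' else s.
exists d; split; first by case => //=; exact: ltW.
split.
  case => [|i] [|j] //=.
  by rewrite ltnS; apply: d'mon.
split.
  case => [|i]; first by rewrite minnSS.
  by rewrite minnSS ltnS => /d'z.
pose BU : 'M[R]_(1 + m) := block_mx 1%:M 0 0 U'.
pose BV : 'M[R]_(1 + n) := block_mx 1%:M 0 0 V'.
have orthB k (W : 'M[R]_k) : W *m W^T = 1%:M ->
    (block_mx (1%:M : 'M_1) 0 0 W) *m (block_mx (1%:M : 'M_1) 0 0 W)^T = 1%:M.
  move=> HW; rewrite tr_block_mx mulmx_block !trmx0 !trmx1 !mul0mx !mulmx0 !mulmx1.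
  by rewrite !addr0 !add0r HW -scalar_mx_block.
exists (Qu *m BU), (Qv *m BV); split.
  by rewrite trmx_mul mulmxA -(mulmxA Qu) orthB // mulmx1.
split.
  by rewrite trmx_mul mulmxA -(mulmxA Qv) orthB // mulmx1.
have HD : (\matrix_(i < 1 + m, j < 1 + n) (if (i : nat) == j then d i else 0))
    = block_mx s%:M 0 0 (Dmx m n d').
  rewrite -[LHS]submxK; congr block_mx; apply/matrixP => i j; rewrite !mxE /=.
  - by rewrite !ord1.
  - by rewrite ord1 add1n.
  - by rewrite ord1 add1n.
  - by rewrite !add1n eqSS add0n.
have HB : BU *m block_mx s%:M 0 0 (Dmx m n d') *m BV^T = T.
  rewrite /BU /BV tr_block_mx !trmx0 !trmx1 mulmx_block !mul0mx !mulmx0 !mul1mx.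
  rewrite !addr0 !add0r mulmx_block !mul0mx !mulmx0 !mulmx1 !addr0 !add0r.
  by rewrite HT HA'.
rewrite HD trmx_mul !mulmxA.
have -> : Qu *m BU *m block_mx s%:M 0 0 (Dmx m n d') *m BV^T = Qu *m T.
  by rewrite -HB !mulmxA.
rewrite defT.
by rewrite !mulmxA HQu2 mul1mx -mulmxA HQv2 mulmx1.
Qed.

End SVDmain.
Section Tensor.
Variable R : realType.

Lemma iso_row n (Q : 'M[R]_n) (y : 'I_n -> R) : Q *m Q^T = 1%:M ->
  \sum_b (\sum_j Q j b * y j) ^+ 2 = \sum_j y j ^+ 2.
Proof.
move=> HQ.
have E j j' : \sum_b Q j b * y j * (Q j' b * y j') = y j * y j' * (j == j')%:R.
  have := congr1 (fun M : 'M[R]_n => M j j') HQ; rewrite !mxE => <-.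
  rewrite mulr_sumr; apply: eq_bigr => b _; rewrite mxE; ring.
rewrite (eq_bigr (fun b => \sum_j \sum_j' Q j b * y j * (Q j' b * y j'))); last first.
  by move=> b _; rewrite expr2 mulr_suml; apply: eq_bigr => j _; rewrite mulr_sumr.
rewrite exchange_big /=; apply: eq_bigr => j _; rewrite exchange_big /=.
rewrite (eq_bigr (fun j' => y j * y j' * (j == j')%:R)) => [|j' _]; last exact: E.
rewrite (bigD1 j) //= big1 ?addr0 => [|j' Hj'].
  by rewrite eqxx mulr1 expr2.
by rewrite eq_sym (negPf Hj') mulr0.
Qed.

Lemma iso_col n (Q : 'M[R]_n) (y : 'I_n -> R) : Q *m Q^T = 1%:M ->
  \sum_i (\sum_a Q i a * y a) ^+ 2 = \sum_a y a ^+ 2.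
Proof.
move=> HQ; have HQ' : Q^T *m Q^T^T = 1%:M by rewrite trmxK orthC.
rewrite -(iso_row y HQ'); apply: eq_bigr => i _; congr (_ ^+ 2).
by apply: eq_bigr => a _; rewrite mxE.
Qed.

Definition rot p q r (Q1 : 'M[R]_p) (Q2 : 'M[R]_q) (Q3 : 'M[R]_r)
  (T : tensor R p q r) : tensor R p q r :=
  fun a b c => \sum_i \sum_j \sum_k Q1 i a * Q2 j b * Q3 k c * T i j k.

Lemma rot1E p q r Q1 Q2 Q3 (T : tensor R p q r) a b c :
  rot Q1 Q2 Q3 T a b c = \sum_j \sum_k Q2 j b * Q3 k c * (\sum_i Q1 i a * T i j k).
Proof.
rewrite /rot exchange_big /=; apply: eq_bigr => j _.
rewrite exchange_big /=; apply: eq_bigr => k _.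
rewrite mulr_sumr; apply: eq_bigr => i _; ring.
Qed.

Lemma iso2 q r (Q2 : 'M[R]_q) (Q3 : 'M[R]_r) (Y : 'I_q -> 'I_r -> R) :
  Q2 *m Q2^T = 1%:M -> Q3 *m Q3^T = 1%:M ->
  \sum_b \sum_c (\sum_j \sum_k Q2 j b * Q3 k c * Y j k) ^+ 2 =
  \sum_j \sum_k Y j k ^+ 2.
Proof.
move=> H2 H3.
transitivity (\sum_c \sum_b (\sum_j Q2 j b * (\sum_k Q3 k c * Y j k)) ^+ 2).
  rewrite exchange_big /=; apply: eq_bigr => c _; apply: eq_bigr => b _.
  congr (_ ^+ 2); apply: eq_bigr => j _; rewrite mulr_sumr.
  by apply: eq_bigr => k _; ring.
under eq_bigr => c _ do rewrite (iso_row (fun j => \sum_k Q3 k c * Y j k) H2).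
rewrite exchange_big /=; apply: eq_bigr => j _.
exact: (iso_row (fun k => Y j k) H3).
Qed.

Lemma energy1 p q r Q1 Q2 Q3 (T : tensor R p q r) a :
  Q2 *m Q2^T = 1%:M -> Q3 *m Q3^T = 1%:M ->
  \sum_b \sum_c rot Q1 Q2 Q3 T a b c ^+ 2 =
  \sum_j \sum_k (\sum_i Q1 i a * T i j k) ^+ 2.
Proof.
move=> H2 H3; under eq_bigr => b _ do under eq_bigr => c _ do rewrite rot1E.
exact: (iso2 (fun j k => \sum_i Q1 i a * T i j k) H2 H3).
Qed.

Lemma rot_perm2 p q r Q1 Q2 Q3 (T : tensor R p q r) a b c :
  rot Q1 Q2 Q3 T a b c = rot Q2 Q1 Q3 (fun j i k => T i j k) b a c.
Proof.
rewrite /rot exchange_big /=; apply: eq_bigr => j _; apply: eq_bigr => i _.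
by apply: eq_bigr => k _; ring.
Qed.

Lemma rot_perm3 p q r Q1 Q2 Q3 (T : tensor R p q r) a b c :
  rot Q1 Q2 Q3 T a b c = rot Q3 Q1 Q2 (fun k i j => T i j k) c a b.
Proof.
rewrite /rot.
transitivity (\sum_i \sum_k \sum_j Q1 i a * Q2 j b * Q3 k c * T i j k).
  by apply: eq_bigr => i _; rewrite exchange_big.
rewrite exchange_big /=; apply: eq_bigr => k _; apply: eq_bigr => i _.
by apply: eq_bigr => j _; ring.
Qed.

Lemma energy2 p q r Q1 Q2 Q3 (T : tensor R p q r) b :
  Q1 *m Q1^T = 1%:M -> Q3 *m Q3^T = 1%:M ->
  \sum_a \sum_c rot Q1 Q2 Q3 T a b c ^+ 2 =
  \sum_i \sum_k (\sum_j Q2 j b * T i j k) ^+ 2.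
Proof.
move=> H1 H3; under eq_bigr => a _ do under eq_bigr => c _ do rewrite rot_perm2.
exact: (energy1 Q2 (fun j i k => T i j k) b H1 H3).
Qed.

Lemma energy3 p q r Q1 Q2 Q3 (T : tensor R p q r) c :
  Q1 *m Q1^T = 1%:M -> Q2 *m Q2^T = 1%:M ->
  \sum_a \sum_b rot Q1 Q2 Q3 T a b c ^+ 2 =
  \sum_i \sum_j (\sum_k Q3 k c * T i j k) ^+ 2.
Proof.
move=> H1 H2; under eq_bigr => a _ do under eq_bigr => b _ do rewrite rot_perm3.
exact: (energy1 Q3 (fun k i j => T i j k) c H1 H2).
Qed.

Lemma iso3 p q r Q1 Q2 Q3 (T : tensor R p q r) :
  Q1 *m Q1^T = 1%:M -> Q2 *m Q2^T = 1%:M -> Q3 *m Q3^T = 1%:M ->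
  \sum_a \sum_b \sum_c rot Q1 Q2 Q3 T a b c ^+ 2 =
  \sum_i \sum_j \sum_k T i j k ^+ 2.
Proof.
move=> H1 H2 H3; under eq_bigr => a _ do rewrite energy1 //.
transitivity (\sum_j \sum_k \sum_a (\sum_i Q1 i a * T i j k) ^+ 2).
  by rewrite exchange_big; apply: eq_bigr => j _; rewrite exchange_big.
transitivity (\sum_j \sum_k \sum_i T i j k ^+ 2).
  by apply: eq_bigr => j _; apply: eq_bigr => k _; exact: (iso_row (fun i => T i j k) H1).
by rewrite [RHS]exchange_big; apply: eq_bigr => j _; rewrite exchange_big.
Qed.

End Tensor.
Section Tensor2.
Variable R : realType.

Lemma sv_energy p N (M : 'M[R]_(p, N)) (d : nat -> R) U V :
  (forall i, (minn p N <= i)%N -> d i = 0) ->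
  U *m U^T = 1%:M -> V *m V^T = 1%:M -> M = U *m Dmx p N d *m V^T ->
  forall a : 'I_p, \sum_c (\sum_i U i a * M i c) ^+ 2 = d a ^+ 2.
Proof.
move=> Hz HU HV HM a.
have E c : \sum_i U i a * M i c = (Dmx p N d *m V^T) a c.
  have -> : Dmx p N d *m V^T = U^T *m M by rewrite HM !mulmxA orthC // mul1mx.
  by rewrite mxE; apply: eq_bigr => i _; rewrite mxE.
under eq_bigr => c _ do rewrite E.
case: (ltnP a N) => HaN.
  have E2 c : (Dmx p N d *m V^T) a c = d a * V c (Ordinal HaN).
    rewrite mxE (bigD1 (Ordinal HaN)) //= big1 ?addr0 => [|b Hb]; rewrite !mxE.
      by rewrite eqxx.
    suff -> : ((a : nat) == b) = false by rewrite mul0r.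
    apply/negbTE; apply: contra Hb => /eqP H; apply/eqP/val_inj => /=; by rewrite H.
  under eq_bigr => c _ do rewrite E2 exprMn.
  rewrite -mulr_sumr.
  have -> : \sum_c V c (Ordinal HaN) ^+ 2 = 1.
    have := congr1 (fun X : 'M[R]_N => X (Ordinal HaN) (Ordinal HaN)) (orthC HV).
    rewrite !mxE eqxx /= => H; rewrite -[RHS]H; apply: eq_bigr => c _.
    by rewrite mxE expr2.
  by rewrite mulr1.
rewrite Hz; last by apply: leq_trans HaN; exact: geq_minr.
rewrite expr0n /= big1 // => c _; rewrite mxE big1 ?expr0n // => b _; rewrite !mxE.
suff -> : ((a : nat) == b) = false by rewrite mul0r.
by apply/negbTE; rewrite neq_ltn; apply/orP; right; apply: leq_trans (ltn_ord b) HaN.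
Qed.

Lemma sum_mxvec q r (f : 'I_(q * r) -> R) :
  \sum_c f c = \sum_j \sum_k f (mxvec_index j k).
Proof.
rewrite (reindex (uncurry (@mxvec_index q r))); last first.
  have [g Hg1 Hg2] := curry_mxvec_bij q r.
  by exists g => x _; [apply: Hg1 | apply: Hg2].
by rewrite pair_big /=; apply: eq_bigr => -[j k].
Qed.

Lemma unfold1E p q r (T : tensor R p q r) i j k :
  unfold1 T i (mxvec_index j k) = T i j k.
Proof. by rewrite /unfold1 mxE mxvecE mxE. Qed.

Lemma unfold2E p q r (T : tensor R p q r) i j k :
  unfold2 T j (mxvec_index i k) = T i j k.
Proof. by rewrite /unfold2 mxE mxvecE mxE. Qed.

Lemma unfold3E p q r (T : tensor R p q r) i j k :
  unfold3 T k (mxvec_index i j) = T i j k.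
Proof. by rewrite /unfold3 mxE mxvecE mxE. Qed.

Lemma sv_seq_spec m n (A : 'M[R]_(m, n)) : is_sv_seq A (sv_seq A).
Proof. by rewrite /sv_seq; apply: ClassicalEpsilon.epsilon_spec; exact: svd_exists. Qed.

End Tensor2.
Section Tensor3.
Variable R : realType.
Variables p q r : nat.
Implicit Types T : tensor R p q r.

Definition m1 (Q : 'M[R]_p) T : tensor R p q r := fun a j k => \sum_i Q i a * T i j k.
Definition m2 (Q : 'M[R]_q) T : tensor R p q r := fun i b k => \sum_j Q j b * T i j k.
Definition m3 (Q : 'M[R]_r) T : tensor R p q r := fun i j c => \sum_k Q k c * T i j k.

Lemma swap_sum n m (x : 'I_n -> R) (y : 'I_m -> 'I_n -> R) (z : 'I_m -> R) :
  \sum_a x a * (\sum_i y i a * z i) = \sum_i (\sum_a y i a * x a) * z i.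
Proof.
under eq_bigr => a _ do rewrite mulr_sumr.
rewrite exchange_big /=; apply: eq_bigr => i _; rewrite mulr_suml.
by apply: eq_bigr => a _; ring.
Qed.

Lemma rot_m Q1 Q2 Q3 T : rot Q1 Q2 Q3 T = m1 Q1 (m2 Q2 (m3 Q3 T)).
Proof.
apply: funext => a; apply: funext => b; apply: funext => c.
rewrite /rot /m1 /m2 /m3; apply: eq_bigr => i _; rewrite mulr_sumr.
apply: eq_bigr => j _; rewrite !mulr_sumr; apply: eq_bigr => k _; ring.
Qed.

Lemma m1_comp P Q T : m1 P (m1 Q T) = m1 (Q *m P) T.
Proof.
apply: funext => x; apply: funext => j; apply: funext => k.
by rewrite /m1 swap_sum; apply: eq_bigr => i _; rewrite mxE.
Qed.
Lemma m2_comp P Q T : m2 P (m2 Q T) = m2 (Q *m P) T.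
Proof.
apply: funext => i; apply: funext => x; apply: funext => k.
by rewrite /m2 swap_sum; apply: eq_bigr => j _; rewrite mxE.
Qed.
Lemma m3_comp P Q T : m3 P (m3 Q T) = m3 (Q *m P) T.
Proof.
apply: funext => i; apply: funext => j; apply: funext => x.
by rewrite /m3 swap_sum; apply: eq_bigr => k _; rewrite mxE.
Qed.

Lemma m1_1 T : m1 1%:M T = T.
Proof.
apply: funext => a; apply: funext => j; apply: funext => k.
rewrite /m1 (bigD1 a) //= big1 ?addr0 => [|i Hi]; rewrite mxE.
  by rewrite eqxx mul1r.
by rewrite (negPf Hi) mul0r.
Qed.
Lemma m2_1 T : m2 1%:M T = T.
Proof.
apply: funext => i; apply: funext => b; apply: funext => k.
rewrite /m2 (bigD1 b) //= big1 ?addr0 => [|j Hj]; rewrite mxE.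
  by rewrite eqxx mul1r.
by rewrite (negPf Hj) mul0r.
Qed.
Lemma m3_1 T : m3 1%:M T = T.
Proof.
apply: funext => i; apply: funext => j; apply: funext => c.
rewrite /m3 (bigD1 c) //= big1 ?addr0 => [|k Hk]; rewrite mxE.
  by rewrite eqxx mul1r.
by rewrite (negPf Hk) mul0r.
Qed.

Lemma m12 P Q T : m1 P (m2 Q T) = m2 Q (m1 P T).
Proof.
apply: funext => a; apply: funext => b; apply: funext => k.
rewrite /m1 /m2; under eq_bigr => i _ do rewrite mulr_sumr.
rewrite exchange_big /=; apply: eq_bigr => j _; rewrite mulr_sumr.
by apply: eq_bigr => i _; ring.
Qed.
Lemma m13 P Q T : m1 P (m3 Q T) = m3 Q (m1 P T).
Proof.
apply: funext => a; apply: funext => j; apply: funext => c.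
rewrite /m1 /m3; under eq_bigr => i _ do rewrite mulr_sumr.
rewrite exchange_big /=; apply: eq_bigr => k _; rewrite mulr_sumr.
by apply: eq_bigr => i _; ring.
Qed.
Lemma m23 P Q T : m2 P (m3 Q T) = m3 Q (m2 P T).
Proof.
apply: funext => i; apply: funext => b; apply: funext => c.
rewrite /m2 /m3; under eq_bigr => j _ do rewrite mulr_sumr.
rewrite exchange_big /=; apply: eq_bigr => k _; rewrite mulr_sumr.
by apply: eq_bigr => j _; ring.
Qed.

Lemma rot_comp P1 P2 P3 Q1 Q2 Q3 T :
  rot P1 P2 P3 (rot Q1 Q2 Q3 T) = rot (Q1 *m P1) (Q2 *m P2) (Q3 *m P3) T.
Proof.
by rewrite !rot_m -m13 -m12 m1_comp -m23 m2_comp m3_comp.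
Qed.

Lemma rot_inv Q1 Q2 Q3 T : Q1 *m Q1^T = 1%:M -> Q2 *m Q2^T = 1%:M ->
  Q3 *m Q3^T = 1%:M -> rot Q1^T Q2^T Q3^T (rot Q1 Q2 Q3 T) = T.
Proof.
by move=> H1 H2 H3; rewrite rot_comp H1 H2 H3 rot_m m1_1 m2_1 m3_1.
Qed.

Lemma rotB Q1 Q2 Q3 (A B : tensor R p q r) a b c :
  rot Q1 Q2 Q3 A a b c - rot Q1 Q2 Q3 B a b c =
  rot Q1 Q2 Q3 (fun i j k => A i j k - B i j k) a b c.
Proof.
rewrite /rot -sumrB; apply: eq_bigr => i _; rewrite -sumrB; apply: eq_bigr => j _.
by rewrite -sumrB; apply: eq_bigr => k _; ring.
Qed.

End Tensor3.
Section HOSVD.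
Variable R : realType.

Lemma sum_ind n (P : pred 'I_n) (g : 'I_n -> R) :
  \sum_a (P a)%:R * g a = \sum_(a | P a) g a.
Proof. by rewrite [RHS]big_mkcond; apply: eq_bigr => a _; case: (P a); rewrite ?mul1r ?mul0r. Qed.

Lemma Hbt (x y z : bool) (F : R) : ((x%:R * (y%:R * (z%:R * F))) - F) ^+ 2 <=
    (~~ x)%:R * F ^+ 2 + (~~ y)%:R * F ^+ 2 + (~~ z)%:R * F ^+ 2.
Proof.
have := sqr_ge0 F.
by case: x; case: y; case: z => /= H; rewrite ?mul1r ?mul0r ?subrr ?sub0r ?sqrrN ?expr0n /=; lra.
Qed.

Lemma tail_conv p (r1 : nat) (d : nat -> R) :
  \sum_(a < p) (r1 <= a)%N%:R * d a ^+ 2 = \sum_(r1.+1 <= t < p.+1) d t.-1 ^+ 2.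
Proof.
rewrite big_add1 /= big_geq_mkord.
by rewrite (sum_ind (fun a : 'I_p => (r1 <= a)%N) (fun a => d a ^+ 2)).
Qed.

Lemma hosvd p q r (E : tensor R p q r) r1 r2 r3 :
  (r1 <= p)%N -> (r2 <= q)%N -> (r3 <= r)%N ->
  exists (G : tensor R r1 r2 r3) (U1 : 'M[R]_(p, r1)) (U2 : 'M[R]_(q, r2))
         (U3 : 'M[R]_(r, r3)),
    \sum_i \sum_j \sum_k (tucker G U1 U2 U3 i j k - E i j k) ^+ 2 <=
      \sum_(r1.+1 <= t < p.+1) sigma (unfold1 E) t ^+ 2
    + \sum_(r2.+1 <= t < q.+1) sigma (unfold2 E) t ^+ 2
    + \sum_(r3.+1 <= t < r.+1) sigma (unfold3 E) t ^+ 2.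
Proof.
move=> h1 h2 h3.
have [_ [_ [z1 [U [V1 [HU [HV1 HM1]]]]]]] := sv_seq_spec (unfold1 E).
have [_ [_ [z2 [V [V2 [HV [HV2 HM2]]]]]]] := sv_seq_spec (unfold2 E).
have [_ [_ [z3 [W [V3 [HW [HV3 HM3]]]]]]] := sv_seq_spec (unfold3 E).
set d1 := sv_seq (unfold1 E) in z1 HM1.
set d2 := sv_seq (unfold2 E) in z2 HM2.
set d3 := sv_seq (unfold3 E) in z3 HM3.
have En1 a : \sum_j \sum_k (\sum_i U i a * E i j k) ^+ 2 = d1 a ^+ 2.
  rewrite -(sv_energy z1 HU HV1 HM1) sum_mxvec; apply: eq_bigr => j _.
  apply: eq_bigr => k _; congr (_ ^+ 2); apply: eq_bigr => i _; by rewrite unfold1E.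
have En2 b : \sum_i \sum_k (\sum_j V j b * E i j k) ^+ 2 = d2 b ^+ 2.
  rewrite -(sv_energy z2 HV HV2 HM2) sum_mxvec; apply: eq_bigr => i _.
  apply: eq_bigr => k _; congr (_ ^+ 2); apply: eq_bigr => j _; by rewrite unfold2E.
have En3 c : \sum_i \sum_j (\sum_k W k c * E i j k) ^+ 2 = d3 c ^+ 2.
  rewrite -(sv_energy z3 HW HV3 HM3) sum_mxvec; apply: eq_bigr => i _.
  apply: eq_bigr => j _; congr (_ ^+ 2); apply: eq_bigr => k _; by rewrite unfold3E.
set F := rot U V W E.
pose w1 := widen_ord h1; pose w2 := widen_ord h2; pose w3 := widen_ord h3.
pose Fm (a : 'I_p) (b : 'I_q) (c : 'I_r) := (a < r1)%N%:R * ((b < r2)%N%:R * ((c < r3)%N%:R * F a b c)).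
exists (fun a b c => F (w1 a) (w2 b) (w3 c)), (\matrix_(i, a) U i (w1 a)),
  (\matrix_(j, b) V j (w2 b)), (\matrix_(k, c) W k (w3 c)).
have Ht i j k : tucker (fun a b c => F (w1 a) (w2 b) (w3 c)) (\matrix_(i, a) U i (w1 a))
  (\matrix_(j, b) V j (w2 b)) (\matrix_(k, c) W k (w3 c)) i j k = rot U^T V^T W^T Fm i j k.
  rewrite /rot /Fm /tucker.
  transitivity (\sum_(a < p | (a < r1)%N) \sum_(b < q | (b < r2)%N) \sum_(c < r | (c < r3)%N)
     U i a * V j b * W k c * F a b c).
    rewrite (big_ord_narrow h1); apply: eq_bigr => a _.
    rewrite (big_ord_narrow h2); apply: eq_bigr => b _.
    rewrite (big_ord_narrow h3); apply: eq_bigr => c _.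
    by rewrite !mxE; ring.
  rewrite -sum_ind; apply: eq_bigr => a _.
  rewrite -sum_ind mulr_sumr; apply: eq_bigr => b _.
  rewrite -sum_ind !mulr_sumr; apply: eq_bigr => c _.
  by rewrite !mxE; ring.
have HE i j k : E i j k = rot U^T V^T W^T F i j k by rewrite /F rot_inv.
have HUt : U^T *m U^T^T = 1%:M by rewrite trmxK orthC.
have HVt : V^T *m V^T^T = 1%:M by rewrite trmxK orthC.
have HWt : W^T *m W^T^T = 1%:M by rewrite trmxK orthC.
under eq_bigr => i _ do under eq_bigr => j _ do under eq_bigr => k _ do
  rewrite Ht HE rotB.
rewrite (iso3 (fun a b c => Fm a b c - F a b c) HUt HVt HWt).
have Hb a b c : (Fm a b c - F a b c) ^+ 2 <=
    (r1 <= a)%N%:R * F a b c ^+ 2 + (r2 <= b)%N%:R * F a b c ^+ 2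
    + (r3 <= c)%N%:R * F a b c ^+ 2.
  rewrite /Fm (leqNgt r1 a) (leqNgt r2 b) (leqNgt r3 c); exact: (Hbt (a < r1)%N (b < r2)%N (c < r3)%N (F a b c)).
apply: le_trans.
  apply: ler_sum => a _; apply: ler_sum => b _; apply: ler_sum => c _; exact: Hb.
set X1 := fun (a : 'I_p) (b : 'I_q) (c : 'I_r) => (r1 <= a)%N%:R * F a b c ^+ 2.
set X2 := fun (a : 'I_p) (b : 'I_q) (c : 'I_r) => (r2 <= b)%N%:R * F a b c ^+ 2.
set X3 := fun (a : 'I_p) (b : 'I_q) (c : 'I_r) => (r3 <= c)%N%:R * F a b c ^+ 2.
have -> : \sum_a \sum_b \sum_c (X1 a b c + X2 a b c + X3 a b c) =
   \sum_a \sum_b \sum_c X1 a b c + \sum_a \sum_b \sum_c X2 a b c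
   + \sum_a \sum_b \sum_c X3 a b c.
  rewrite -!big_split; apply: eq_bigr => a _; rewrite -!big_split.
  by apply: eq_bigr => b _; rewrite -!big_split.
have S1 : \sum_a \sum_b \sum_c X1 a b c = \sum_(a < p) (r1 <= a)%N%:R * d1 a ^+ 2.
  apply: eq_bigr => a _; rewrite -(En1 a) -(@energy1 _ _ _ _ U V W E a HV HW) mulr_sumr.
  by apply: eq_bigr => b _; rewrite mulr_sumr.
have S2 : \sum_a \sum_b \sum_c X2 a b c = \sum_(b < q) (r2 <= b)%N%:R * d2 b ^+ 2.
  rewrite exchange_big /=; apply: eq_bigr => b _.
  rewrite -(En2 b) -(@energy2 _ _ _ _ U V W E b HU HW) mulr_sumr.
  by apply: eq_bigr => a _; rewrite mulr_sumr.
have S3 : \sum_a \sum_b \sum_c X3 a b c = \sum_(c < r) (r3 <= c)%N%:R * d3 c ^+ 2.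
  transitivity (\sum_c \sum_a \sum_b X3 a b c).
    rewrite (eq_bigr (fun a => \sum_c \sum_b X3 a b c)) => [|a _]; last by rewrite exchange_big.
    by rewrite exchange_big.
  apply: eq_bigr => c _.
  rewrite -(En3 c) -(@energy3 _ _ _ _ U V W E c HU HV) mulr_sumr.
  by apply: eq_bigr => a _; rewrite mulr_sumr.
rewrite S1 S2 S3 /sigma -/d1 -/d2 -/d3.
by rewrite -(tail_conv p r1 d1) -(tail_conv q r2 d2) -(tail_conv r r3 d3).
Qed.

End HOSVD.
Section KANlem.
Variable R : realType.

Lemma CS (I : finType) (x y : I -> R) :
  (\sum_i x i * y i) ^+ 2 <= (\sum_i x i ^+ 2) * (\sum_i y i ^+ 2).
Proof.
set S := \sum_i x i ^+ 2; set T := \sum_i y i ^+ 2; set P := \sum_i x i * y i.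
have S0 : 0 <= S by apply: sumr_ge0 => i _; exact: sqr_ge0.
have T0 : 0 <= T by apply: sumr_ge0 => i _; exact: sqr_ge0.
have Hq t : 0 <= t ^+ 2 * S - 2 * t * P + T.
  have -> : t ^+ 2 * S - 2 * t * P + T = \sum_i (t * x i - y i) ^+ 2.
    rewrite /S /T /P mulr_sumr mulr_sumr -sumrB -big_split /=.
    by apply: eq_bigr => i _; ring.
  by apply: sumr_ge0 => i _; exact: sqr_ge0.
have [S00|Sn0] := eqVneq S 0.
  have Hx i : x i = 0.
    move/eqP: S00; rewrite psumr_eq0 => [/allP H|j _]; last exact: sqr_ge0.
    by have := H i (mem_index_enum i); rewrite /= sqrf_eq0 => /eqP.
  rewrite /P big1 ?expr0n ?S00 ?mul0r // => i _; by rewrite Hx mul0r.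
have Spos : 0 < S by rewrite lt_def Sn0.
have := Hq (P / S).
have -> : (P / S) ^+ 2 * S - 2 * (P / S) * P + T = T - P ^+ 2 / S by field.
rewrite subr_ge0 ler_pdivrMr // => H; by rewrite mulrC.
Qed.

Lemma CS2 (I J : finType) (x y : I -> J -> R) :
  (\sum_i \sum_j x i j * y i j) ^+ 2 <=
  (\sum_i \sum_j x i j ^+ 2) * (\sum_i \sum_j y i j ^+ 2).
Proof.
rewrite !pair_big /=.
exact: (CS (fun t : I * J => x t.1 t.2) (fun t => y t.1 t.2)).
Qed.

Lemma sum_sq_ge0 (I : finType) (x : I -> R) : 0 <= \sum_i x i ^+ 2.
Proof. by apply: sumr_ge0 => i _; exact: sqr_ge0. Qed.

Lemma norm2_ge0 m (v : 'I_m -> R) : 0 <= norm2 v.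
Proof. exact: sqrtr_ge0. Qed.

Lemma sqrt_le (x y : R) : 0 <= y -> x <= y ^+ 2 -> Num.sqrt x <= y.
Proof.
move=> y0 H; rewrite -(ger0_norm y0) -sqrtr_sqr.
have [x0|xn] := leP 0 x; first by rewrite ler_sqrt // sqr_ge0.
by rewrite ltr0_sqrtr // sqrtr_ge0.
Qed.

Lemma minkowski m (u v : 'I_m -> R) :
  norm2 (fun i => u i + v i) <= norm2 u + norm2 v.
Proof.
rewrite {1}/norm2; apply: sqrt_le; first by rewrite addr_ge0 ?norm2_ge0.
have Hu := sqr_sqrtr (sum_sq_ge0 u); have Hv := sqr_sqrtr (sum_sq_ge0 v).
rewrite /norm2.
set a := Num.sqrt _ in Hu *; set c := Num.sqrt _ in Hv *.
have a0 : 0 <= a by apply: sqrtr_ge0.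
have c0 : 0 <= c by apply: sqrtr_ge0.
have HP := CS u v.
rewrite -Hu -Hv in HP.
have -> : \sum_i (u i + v i) ^+ 2 =
    \sum_i u i ^+ 2 + 2 * \sum_i u i * v i + \sum_i v i ^+ 2.
  rewrite mulr_sumr -!big_split /=; apply: eq_bigr => i _; ring.
rewrite -Hu -Hv; set P := \sum_i u i * v i in HP *.
have ac0 : 0 <= a * c by apply: mulr_ge0.
have HPac : P <= a * c.
  case: (leP P (a * c)) => // H; exfalso.
  have h1 : 0 < P - a * c by rewrite subr_gt0.
  have h2 : 0 < P + a * c by apply: (lt_le_trans (le_lt_trans ac0 H)); rewrite lerDl.
  have := mulr_gt0 h1 h2; rewrite -subr_sqr exprMn; lra.
have -> : (a + c) ^+ 2 = a ^+ 2 + 2 * (a * c) + c ^+ 2 by ring.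
lra.
Qed.

End KANlem.
Section Layer.
Variable R : realType.
Variables (nd : nat) (b : 'I_nd -> R -> R) (B Lb : R).

Lemma layer_param p q (A A' : tensor R p q nd) (z : 'I_p -> R) :
  (forall k x, `|b k x| <= B) ->
  \sum_j (kan_layer b A z j - kan_layer b A' z j) ^+ 2 <=
  B ^+ 2 * (p * nd)%:R * \sum_i \sum_j \sum_k (A i j k - A' i j k) ^+ 2.
Proof.
move=> HB.
have Hb2 : \sum_(i < p) \sum_(k < nd) b k (z i) ^+ 2 <= B ^+ 2 * (p * nd)%:R.
  apply: (@le_trans _ _ (\sum_(i < p) \sum_(k < nd) B ^+ 2)).
    apply: ler_sum => i _; apply: ler_sum => k _.
    rewrite -real_normK ?num_real //; apply: lerXn2r => //; rewrite ?nnegrE //.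
    exact: le_trans (normr_ge0 _) (HB k (z i)).
  under eq_bigr => i _ do rewrite sumr_const card_ord.
  by rewrite sumr_const card_ord -mulrnA mulr_natr mulnC.
have Hj j : (kan_layer b A z j - kan_layer b A' z j) ^+ 2 <=
    B ^+ 2 * (p * nd)%:R * \sum_i \sum_k (A i j k - A' i j k) ^+ 2.
  have -> : kan_layer b A z j - kan_layer b A' z j =
      \sum_i \sum_k (A i j k - A' i j k) * b k (z i).
    rewrite /kan_layer -sumrB; apply: eq_bigr => i _; rewrite -sumrB.
    by apply: eq_bigr => k _; ring.
  apply: le_trans (CS2 _ _) _; rewrite mulrC; apply: ler_wpM2r => //.
  by apply: sumr_ge0 => i _; exact: sum_sq_ge0.
apply: le_trans (ler_sum _ (fun j _ => Hj j)) _.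
rewrite -mulr_sumr; apply: ler_wpM2l; first by rewrite mulr_ge0 ?sqr_ge0.
by rewrite exchange_big.
Qed.

Lemma layer_input p q (A : tensor R p q nd) (z z' : 'I_p -> R) :
  (forall k, lipschitz_with Lb (b k)) ->
  \sum_j (kan_layer b A z j - kan_layer b A z' j) ^+ 2 <=
  (\sum_i \sum_j \sum_k A i j k ^+ 2) * (Lb ^+ 2 * nd%:R) * \sum_i (z i - z' i) ^+ 2.
Proof.
move=> HL.
have Hb2 : \sum_(i < p) \sum_(k < nd) (b k (z i) - b k (z' i)) ^+ 2 <=
    Lb ^+ 2 * nd%:R * \sum_i (z i - z' i) ^+ 2.
  rewrite mulr_sumr; apply: ler_sum => i _.
  apply: (@le_trans _ _ (\sum_(k < nd) Lb ^+ 2 * (z i - z' i) ^+ 2)).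
    apply: ler_sum => k _; rewrite -real_normK ?num_real //.
    have := HL k (z i) (z' i).
    have := normr_ge0 (b k (z i) - b k (z' i)); have := normr_ge0 (z i - z' i).
    rewrite -[(z i - z' i) ^+ 2]real_normK ?num_real //.
    move=> h1 h2 h3; have h4 : 0 <= Lb * `|z i - z' i| by apply: le_trans h3.
    rewrite -exprMn; apply: lerXn2r => //; rewrite ?nnegrE //.
  rewrite sumr_const card_ord.
  by rewrite [X in _ <= X](_ : _ = Lb ^+ 2 * (z i - z' i) ^+ 2 *+ nd) // mulrAC mulr_natr.
have Hj j : (kan_layer b A z j - kan_layer b A z' j) ^+ 2 <=
    (\sum_i \sum_k A i j k ^+ 2) * (Lb ^+ 2 * nd%:R * \sum_i (z i - z' i) ^+ 2).
  have -> : kan_layer b A z j - kan_layer b A z' j =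
      \sum_i \sum_k A i j k * (b k (z i) - b k (z' i)).
    rewrite /kan_layer -sumrB; apply: eq_bigr => i _; rewrite -sumrB.
    by apply: eq_bigr => k _; ring.
  apply: le_trans (CS2 _ _) _; apply: ler_wpM2l => //.
  by apply: sumr_ge0 => i _; exact: sum_sq_ge0.
apply: le_trans (ler_sum _ (fun j _ => Hj j)) _.
by rewrite -mulr_suml exchange_big /= -!mulrA.
Qed.

End Layer.
Section KANbound.
Variable R : realType.
Variables (nd : nat) (b : 'I_nd -> R -> R) (B Lb M : R).
Hypotheses (B0 : 0 < B) (Lb0 : 0 < Lb) (M0 : 0 < M).
Hypothesis HB : forall k x, `|b k x| <= B.
Hypothesis HL : forall k, lipschitz_with Lb (b k).

Definition sqd p q (A A' : tensor R p q nd) : R :=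
  \sum_i \sum_j \sum_k (A i j k - A' i j k) ^+ 2.

Lemma layer_param_n p q (A A' : tensor R p q nd) (z : 'I_p -> R) :
  norm2 (fun j => kan_layer b A z j - kan_layer b A' z j) <=
  B * Num.sqrt (p * nd)%:R * Num.sqrt (sqd A A').
Proof.
apply: sqrt_le; first by rewrite !mulr_ge0 ?sqrtr_ge0 // ltW.
rewrite !exprMn !sqr_sqrtr ?ler0n //; first exact: layer_param.
by apply: sumr_ge0 => i _; apply: sumr_ge0 => j _; apply: sum_sq_ge0.
Qed.

Lemma layer_input_n p q (A : tensor R p q nd) (z z' : 'I_p -> R) :
  frob A <= M ->
  norm2 (fun j => kan_layer b A z j - kan_layer b A z' j) <=
  M * Lb * Num.sqrt nd%:R * norm2 (fun i => z i - z' i).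
Proof.
move=> HA.
apply: (@le_trans _ _ (frob A * Lb * Num.sqrt nd%:R * norm2 (fun i => z i - z' i))).
  apply: sqrt_le; first by rewrite !mulr_ge0 ?sqrtr_ge0 // ltW.
  rewrite !exprMn /frob /norm2 !sqr_sqrtr ?ler0n ?sum_sq_ge0 //; last first.
    by apply: sumr_ge0 => i _; apply: sumr_ge0 => j _; apply: sum_sq_ge0.
  by apply: le_trans (layer_input _ _ _ HL) _; rewrite mulrA.
apply: ler_wpM2r; first exact: norm2_ge0.
apply: ler_wpM2r; first exact: sqrtr_ge0.
by apply: ler_wpM2r => //; apply: ltW.
Qed.

Lemma kan_z_bound (n : nat -> nat) (Aft Atg : forall l, tensor R (n l) (n l.+1) nd)
  (x : 'I_(n 0%N) -> R) L :
  (forall l, (l < L)%N -> frob (Atg l) <= M) ->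
  forall k, (k <= L)%N ->
  norm2 (fun q => @kan_z R n nd b Aft x k q - @kan_z R n nd b Atg x k q) <=
  \sum_(l < k) ((M * Lb * Num.sqrt nd%:R) ^+ (k - l.+1) * B
       * Num.sqrt ((n l * nd)%:R)) * Num.sqrt (sqd (Aft l) (Atg l)).
Proof.
move=> HM; elim => [|k IH] HkL.
  rewrite big_ord0 /norm2 big1 ?sqrtr0 // => i _; by rewrite subrr expr0n.
have HkL' : (k <= L)%N by apply: ltnW.
set K := M * Lb * Num.sqrt nd%:R.
have K0 : 0 <= K by rewrite !mulr_ge0 ?sqrtr_ge0 // ltW.
set zf := @kan_z R n nd b Aft x k; set zt := @kan_z R n nd b Atg x k.
have -> : (fun q => @kan_z R n nd b Aft x k.+1 q - @kan_z R n nd b Atg x k.+1 q) =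
   (fun q => (kan_layer b (Aft k) zf q - kan_layer b (Atg k) zf q)
           + (kan_layer b (Atg k) zf q - kan_layer b (Atg k) zt q)).
  by apply: funext => q /=; rewrite /zf /zt; ring.
apply: le_trans (minkowski _ _) _.
rewrite big_ord_recr /= subnn expr0 mul1r addrC; apply: lerD.
  exact: layer_param_n.
apply: le_trans (layer_input_n _ _ (HM k HkL)) _.
rewrite -/K; apply: le_trans (ler_wpM2l K0 (IH HkL')) _.
rewrite mulr_sumr; apply: ler_sum => l _.
rewrite !mulrA -exprS subSS subnSK //.
Qed.

End KANbound.
Unset Implicit Arguments.
(* Layers are indexed 0-based: paper's layer l (1-based) is l0 = l-1 here,
   with widths n l0 = n_l, n l0.+1 = n_{l+1}. *)
Theorem theorem1 (R : realType) (L : nat) (n : nat -> nat) (nd : nat)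
  (b : 'I_nd -> R -> R) (B Lb M : R)
  (Apt Atg : forall l : nat, tensor R (n l) (n l.+1) nd)
  (r1 r2 r3 : nat -> nat) :
  0 < B -> 0 < M -> 0 < Lb ->
  (forall k, smooth (b k)) ->
  (forall k z, `|b k z| <= B) ->
  (forall k, lipschitz_with Lb (b k)) ->
  (forall l, (l < L)%N -> frob (Atg l) <= M) ->
  (forall l, (l < L)%N -> frob (Apt l) <= M) ->
  (forall l, (l < L)%N ->
     [/\ (1 <= r1 l <= n l)%N, (1 <= r2 l <= n l.+1)%N & (1 <= r3 l <= nd)%N]) ->
  exists (G : forall l : nat, tensor R (r1 l) (r2 l) (r3 l))
         (U1 : forall l : nat, 'M[R]_(n l, r1 l))
         (U2 : forall l : nat, 'M[R]_(n l.+1, r2 l))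
         (U3 : forall l : nat, 'M[R]_(nd, r3 l)),
    forall x : 'I_(n 0%N) -> R,
      norm2 (fun q => kan L b (fun l => tadd (Apt l)
                                 (tucker (G l) (U1 l) (U2 l) (U3 l))) x q
                      - kan L b Atg x q)
      <= \sum_(l < L)
           ((M * Lb * Num.sqrt nd%:R) ^+ (L - l.+1) * B
              * Num.sqrt ((n l * nd)%:R))
           * Num.sqrt (
               \sum_((r1 l).+1 <= r < (n l).+1)
                  sigma (unfold1 (tsub (Atg l) (Apt l))) r ^+ 2
             + \sum_((r2 l).+1 <= r < (n l.+1).+1)
                  sigma (unfold2 (tsub (Atg l) (Apt l))) r ^+ 2
             + \sum_((r3 l).+1 <= r < nd.+1)
                  sigma (unfold3 (tsub (Atg l) (Apt l))) r ^+ 2).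
Proof.
move=> B0 M0 Lb0 Hsm HB HL Htg Hpt Hr.
pose tails l := \sum_((r1 l).+1 <= r < (n l).+1)
                  sigma (unfold1 (tsub (Atg l) (Apt l))) r ^+ 2
             + \sum_((r2 l).+1 <= r < (n l.+1).+1)
                  sigma (unfold2 (tsub (Atg l) (Apt l))) r ^+ 2
             + \sum_((r3 l).+1 <= r < nd.+1)
                  sigma (unfold3 (tsub (Atg l) (Apt l))) r ^+ 2.
have Hex l : exists t : (tensor R (r1 l) (r2 l) (r3 l) * 'M[R]_(n l, r1 l)
      * 'M[R]_(n l.+1, r2 l) * 'M[R]_(nd, r3 l)),
    (l < L)%N -> sqd (tadd (Apt l) (tucker t.1.1.1 t.1.1.2 t.1.2 t.2)) (Atg l) <= tails l.
  case: (ltnP l L) => Hl.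
    have [/andP[_ h1] /andP[_ h2] /andP[_ h3]] := Hr l Hl.
    have [G [U1 [U2 [U3 H]]]] := hosvd (tsub (Atg l) (Apt l)) h1 h2 h3.
    exists (G, U1, U2, U3) => _ /=; apply: le_trans H; rewrite le_eqVlt; apply/orP; left.
    apply/eqP; rewrite /sqd; apply: eq_bigr => i _; apply: eq_bigr => j _.
    by apply: eq_bigr => k _; rewrite /tadd /tsub; congr (_ ^+ 2); ring.
  by exists ((fun _ _ _ => 0), 0, 0, 0).
pose f l := proj1_sig (cid (Hex l)).
have Hf l : (l < L)%N -> sqd (tadd (Apt l) (tucker (f l).1.1.1 (f l).1.1.2 (f l).1.2 (f l).2)) (Atg l) <= tails l.
  exact: (proj2_sig (cid (Hex l))).
exists (fun l => (f l).1.1.1), (fun l => (f l).1.1.2), (fun l => (f l).1.2), (fun l => (f l).2).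
move=> x.
have KB := kan_z_bound B0 Lb0 M0 HB HL.
apply: le_trans (KB n _ Atg x L Htg L (leqnn L)) _.
apply: ler_sum => l _; apply: ler_wpM2l.
  apply: mulr_ge0; last exact: sqrtr_ge0.
  apply: mulr_ge0; last exact: ltW.
  by apply: exprn_ge0; rewrite !mulr_ge0 ?sqrtr_ge0 // ltW.
by apply: ler_wsqrtr; apply: Hf.
Qed.
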